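(* Let $T$ be a location measure defined on (the distributions of) all real random variables with finite variance, and suppose $T$ is additive, i.e. $T(x+y)=T(x)+T(y)$ for all independent $x,y$ with finite variances. Suppose $T$ is continuous at $N(0,1)$: whenever $z_n\to_d z\sim N(0,1)$ (with each $z_n$ of finite variance), $T(z_n)\to T(z)=0$. Then $T(x)=E(x)$ for every real random variable $x$ with finite second moment.
   Context: A location measure is a map $T$ from (distributions of) real random variables to $\mathbb{R}$, depending only on the distribution of its argument, such that $T(ax+b)=aT(x)+b$ for all $a,b\in\mathbb{R}$. *)

(* Defs.v *)
From HB Require Import structures.
From mathcomp Require Import all_boot all_order all_algebra.
From mathcomp Require Import all_classical all_reals all_analysis.
Set Implicit Arguments. Unset Strict Implicit. Unset Printing Implicit Defensive.
Import Order.TTheory GRing.Theory Num.Theory.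
Import numFieldNormedType.Exports.
Local Open Scope classical_set_scope.
Local Open Scope ring_scope.

(* A distribution of a real random variable = a probability measure on the
   Borel sigma-algebra of R, i.e. on [measurableTypeR R] (the sigma-algebra
   generated by the intervals ]a,b]; the same one used by the library's
   [normal_prob]).  Finite variance <=> finite second moment. *)
Notation BorelR R := (measurableTypeR R).
Notation law R := (probability (measurableTypeR R) R).

Definition finite_var {R : realType} (P : law R) : Prop :=
  (\int[P]_x (((x : R) ^+ 2)%:E) < +oo)%E.

Definition affine_image {R : realType} (P : law R) (a b : R)
  : set R -> \bar R :=
  pushforward P (fun t : BorelR R => (a * t + b : BorelR R)).

(* distribution of x + y for independent x ~ P, y ~ Q : image of the
   product law P (x) Q under addition *)
Definition conv_law {R : realType} (P Q : law R) : set R -> \bar R :=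
  pushforward (P \x Q)%E (fun p : BorelR R * BorelR R => (p.1 + p.2 : BorelR R)).

Definition cvg_in_dist {R : realType} (Pn : nat -> law R) (P : law R) : Prop :=
  forall f : R -> R, continuous f -> (exists M : R, forall x, `|f x| <= M) ->
    (fun n => \int[Pn n]_x f x) @ \oo --> \int[P]_x f x.

Definition std_normal {R : realType} : law R := normal_prob (0 : R) 1.

Definition mean {R : realType} (P : law R) : R := \int[P]_x (x : R).

(* a law viewed as a set function (the argument type of T) *)
Definition dist {R : realType} (P : law R) : set R -> \bar R := fun A => P A.

(* Main.v *)
Require Import Defs.
From HB Require Import structures.
From mathcomp Require Import all_boot all_order all_algebra.
From mathcomp Require Import all_classical all_reals all_analysis.
From mathcomp Require Import measurable_realfun.
From mathcomp Require Import ring lra.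
Import Order.TTheory GRing.Theory Num.Theory.
Import numFieldNormedType.Exports.
Local Open Scope classical_set_scope.
Local Open Scope ring_scope.
Section S.
Context {R : realType}.
Local Notation law := (law R).

Definition aff (a b : R) (t : BorelR R) : BorelR R := a * t + b.
Lemma measurable_aff a b : measurable_fun setT (aff a b).
Proof. rewrite /aff. by apply: measurable_funD => //; exact: measurable_funM. Qed.
HB.instance Definition _ a b := isMeasurableFun.Build _ _ _ _ (aff a b) (measurable_aff a b).
Definition addp (p : BorelR R * BorelR R) : BorelR R := p.1 + p.2.
Lemma measurable_addp : measurable_fun setT addp.
Proof. rewrite /addp. apply: measurable_funD => //. Qed.
HB.instance Definition _ := isMeasurableFun.Build _ _ _ _ addp measurable_addp.
Definition affL (P : law) a b : law := distribution P (aff a b).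
Definition convL (P Q : law) : law := distribution (P \x Q)%E addp.
Lemma affLE P a b : dist (affL P a b) = affine_image P a b.
Proof. reflexivity. Qed.
Lemma convLE P Q : dist (convL P Q) = conv_law P Q.
Proof. reflexivity. Qed.

Lemma abs_le_sq (x : R) : `|x| <= 1 + x ^+ 2.
Proof.
have -> : x ^+ 2 = `|x| ^+ 2 by rewrite -normrX ger0_norm ?sqr_ge0.
have := normr_ge0 x; nra.
Qed.

Lemma int_sq (L : law) : finite_var L ->
  L.-integrable setT (fun x : BorelR R => (x ^+ 2)%:E).
Proof.
move=> fv; apply/integrableP; split.
  by apply/measurable_EFinP; exact: exprn_measurable.
under eq_integral => x _ do rewrite gee0_abs ?lee_fin ?sqr_ge0//.
exact: fv.
Qed.

Lemma int_bound (L : law) (g : R -> R) (a b : R) : finite_var L ->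
  measurable_fun setT (g : BorelR R -> R) ->
  (forall x, `|g x| <= a + b * x ^+ 2) ->
  L.-integrable setT (fun x : BorelR R => (g x)%:E).
Proof.
move=> fv mg gb.
apply: (@le_integrable _ _ _ L setT measurableT _ (fun x : BorelR R => (a + b * x ^+ 2)%:E)).
- exact/measurable_EFinP.
- move=> x _ /=; rewrite !lee_fin (le_trans (gb x))//; exact: ler_norm.
- under eq_fun do rewrite EFinD.
  apply: integrableD => //.
    exact: (finite_measure_integrable_cst L a measurableT).
  under eq_fun do rewrite EFinM.
  apply: integrableZl => //; exact: int_sq.
Qed.

Lemma int_x (L : law) : finite_var L ->
  L.-integrable setT (fun x : BorelR R => x%:E).
Proof.
move=> fv; apply: (@int_bound L id 1 1) => //.
by move=> x; rewrite mul1r abs_le_sq.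
Qed.

Definition m2 (L : law) : R := fine (\int[L]_x ((x : R) ^+ 2)%:E).

Lemma m2E (L : law) : finite_var L ->
  (\int[L]_x ((x : R) ^+ 2)%:E)%E = (m2 L)%:E.
Proof. by move=> fv; rewrite /m2 fineK//; apply: integrable_fin_num => //; exact: int_sq. Qed.

Lemma meanE (L : law) : finite_var L ->
  (\int[L]_x (x : R)%:E)%E = (mean L)%:E.
Proof. by move=> fv; rewrite /mean /Rintegral fineK//; apply: integrable_fin_num => //; exact: int_x. Qed.

Lemma quadE (L : law) (a b c : R) : finite_var L ->
  (\int[L]_x (a * x ^+ 2 + b * x + c)%:E)%E = (a * m2 L + b * mean L + c)%:E.
Proof.
move=> fv.
have i2 := int_sq L fv; have i1 := int_x L fv.
have ic := finite_measure_integrable_cst L c measurableT.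
under eq_integral do rewrite !EFinD.
rewrite integralD//=; last first.
  apply: integrableD => //; under eq_fun do rewrite EFinM.
    exact: integrableZl.
  exact: integrableZl.
rewrite integralD//=; [|under eq_fun do rewrite EFinM; exact: integrableZl
                       |under eq_fun do rewrite EFinM; exact: integrableZl].
under eq_integral do rewrite EFinM.
rewrite integralZl//.
under [X in (_ + X + _)%E]eq_integral do rewrite EFinM.
rewrite integralZl// integral_cst//.
rewrite [X in (c%:E * X)%E](_ : _ = 1%E); last exact: probability_setT.
rewrite mule1.
by rewrite m2E// meanE// -!EFinM -!EFinD.
Qed.

Lemma aff_ge0 (L : law) a b (g : R -> \bar R) :
  measurable_fun setT (g : BorelR R -> \bar R) -> (forall x, (0 <= g x)%E) ->
  (\int[affL L a b]_x g x = \int[L]_x g (a * x + b)%R)%E.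
Proof.
move=> mg g0; rewrite /affL /distribution ge0_integral_pushforward//.
Qed.

Lemma aff_int (L : law) a b (g : R -> \bar R) :
  measurable_fun setT (g : BorelR R -> \bar R) ->
  L.-integrable setT (fun x : BorelR R => g (a * x + b)%R) ->
  (\int[affL L a b]_x g x = \int[L]_x g (a * x + b)%R)%E.
Proof.
move=> mg ig; rewrite /affL /distribution integral_pushforward//.
Qed.

Lemma aff_mom (L : law) a b : finite_var L ->
  [/\ finite_var (affL L a b),
      m2 (affL L a b) = a ^+ 2 * m2 L + (2 * a * b) * mean L + b ^+ 2 &
      mean (affL L a b) = a * mean L + b].
Proof.
move=> fv.
have E2 : (\int[affL L a b]_x ((x : R) ^+ 2)%:E)%E =
    (a ^+ 2 * m2 L + (2 * a * b) * mean L + b ^+ 2)%:E.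
  rewrite (@aff_ge0 L a b (fun x => (x ^+ 2)%:E))//; last first.
    - by move=> x; rewrite lee_fin sqr_ge0.
    - by apply/measurable_EFinP; exact: exprn_measurable.
  rewrite -quadE//; apply: eq_integral => x _; congr EFin; ring.
have fv' : finite_var (affL L a b) by rewrite /finite_var E2 ltry.
split => //; first by rewrite /m2 E2.
have := meanE _ fv'; rewrite (@aff_int L a b (fun x => x%:E))//.
- rewrite (_ : (\int[L]_x (a * x + b)%:E)%E = (0 * m2 L + a * mean L + b)%:E).
    by move=> [<-]; rewrite mul0r add0r.
  rewrite -quadE//; apply: eq_integral => x _; congr EFin; ring.
- exact/measurable_EFinP.
- apply: (@int_bound L (fun x => a * x + b) (`|a| + `|b|) `|a|) => //.
    by apply: measurable_funD => //; exact: measurable_funM.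
  move=> x; rewrite (le_trans (ler_normD _ _))// normrM.
  have := abs_le_sq x; have := normr_ge0 a; have := normr_ge0 x; nra.
Qed.

Lemma conv_ge0 (L Q : law) (g : R -> \bar R) :
  measurable_fun setT (g : BorelR R -> \bar R) -> (forall x, (0 <= g x)%E) ->
  (\int[convL L Q]_x g x = \int[L]_x \int[Q]_y g (x + y)%R)%E.
Proof.
move=> mg g0; rewrite /convL /distribution ge0_integral_pushforward//.
rewrite fubini_tonelli1//.
  by apply: measurableT_comp => //; exact: measurable_addp.
by move=> x; exact: g0.
Qed.

Lemma conv_sq (L Q : law) t : finite_var L -> finite_var Q ->
  (\int[convL L Q]_w (((w : R) + t) ^+ 2)%:E)%E =
  (m2 L + (2 * mean Q + 2 * t) * mean L + (m2 Q + 2 * t * mean Q + t ^+ 2))%:E.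
Proof.
move=> fL fQ.
rewrite (@conv_ge0 L Q (fun w => ((w + t) ^+ 2)%:E)); last first.
- by move=> x; rewrite lee_fin sqr_ge0.
- apply/measurable_EFinP; apply: measurable_funX.
  exact: measurable_funD.
transitivity (\int[L]_x ((1 * x ^+ 2 + (2 * mean Q + 2 * t) * x +
    (m2 Q + 2 * t * mean Q + t ^+ 2)))%:E)%E; last first.
  by rewrite quadE// mul1r.
apply: eq_integral => x _.
rewrite (_ : (\int[Q]_y (((x + y) + t) ^+ 2)%:E)%E =
   (\int[Q]_y (1 * y ^+ 2 + (2 * (x + t)) * y + (x + t) ^+ 2)%:E)%E).
  rewrite quadE//; congr EFin; ring.
apply: eq_integral => y _; congr EFin; ring.
Qed.

Lemma conv_mom (L Q : law) : finite_var L -> finite_var Q ->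
  [/\ finite_var (convL L Q),
      m2 (convL L Q) = m2 L + 2 * mean L * mean Q + m2 Q &
      mean (convL L Q) = mean L + mean Q].
Proof.
move=> fL fQ.
have E0 : (\int[convL L Q]_w ((w : R) ^+ 2)%:E)%E =
    (m2 L + 2 * mean L * mean Q + m2 Q)%:E.
  transitivity (\int[convL L Q]_w (((w : R) + 0) ^+ 2)%:E)%E.
    by apply: eq_integral => x _; rewrite addr0.
  rewrite conv_sq//; congr EFin; ring.
have fC : finite_var (convL L Q) by rewrite /finite_var E0 ltry.
have m2C : m2 (convL L Q) = m2 L + 2 * mean L * mean Q + m2 Q.
  by rewrite /m2 E0.
split => //.
have E1 := conv_sq L Q 1 fL fQ.
have := quadE (convL L Q) 1 2 1 fC.
rewrite (_ : (\int[convL L Q]_x (1 * x ^+ 2 + 2 * x + 1)%:E)%E =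
  (\int[convL L Q]_w (((w : R) + 1) ^+ 2)%:E)%E); last first.
  by apply: eq_integral => x _; congr EFin; ring.
rewrite E1 m2C => -[] h.
lra.
Qed.

Fixpoint seqL (P : law) (k : nat) : law :=
  match k with
  | 0 => affL P 1 (- mean P)
  | k'.+1 => affL (convL (seqL P k') (seqL P k')) (2^-1) 0
  end.

Lemma seqL_mom (P : law) : finite_var P -> forall k,
  [/\ finite_var (seqL P k), mean (seqL P k) = 0 &
      m2 (seqL P k) = m2 (seqL P 0) * (2^-1) ^+ k].
Proof.
move=> fP; elim=> [|k [fk mk vk]].
  have [f0 _ m0] := aff_mom P 1 (- mean P) fP.
  by split => //; [rewrite m0; ring | rewrite expr0 mulr1].
have [fC vC mC] := conv_mom _ _ fk fk.
have [f1 v1 m1] := aff_mom _ (2^-1) 0 fC.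
split => //=; first by rewrite m1 mC mk; ring.
rewrite v1 vC mk vk [in RHS]exprS.
change (m2 (affL P 1 (- mean P))) with (m2 (seqL P 0)).
by field.
Qed.

Lemma normal_ge0 (f : R -> \bar R) :
  measurable_fun setT (f : BorelR R -> \bar R) -> (forall x, (0 <= f x)%E) ->
  (\int[std_normal]_x f x =
   \int[lebesgue_measure]_x (f x * (normal_pdf 0 1 x)%:E))%E.
Proof.
move=> mf f0.
have dom := @normal_prob_dominates R 0 1.
rewrite -(@Radon_Nikodym_SigmaFinite.change_of_variables _ _ _
  (std_normal : {finite_measure set _ -> \bar R}) lebesgue_measure dom f setT f0 measurableT mf).
apply: ae_eq_integral => //.
- apply: emeasurable_funM => //; apply: (measurable_int lebesgue_measure).
  exact: Radon_Nikodym_SigmaFinite.f_integrable.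
- apply: emeasurable_funM => //; apply/measurable_EFinP.
  exact: measurable_normal_pdf.
- apply: ae_eqe_mul2l.
  apply: integral_ae_eq => //.
  + exact: Radon_Nikodym_SigmaFinite.f_integrable.
  + apply/measurable_EFinP; exact: measurable_normal_pdf.
  + move=> E _ mE.
    by rewrite -Radon_Nikodym_SigmaFinite.f_integral.
Qed.

Lemma xexpN_le1 (y : R) : 0 <= y -> y * expR (- y) <= 1.
Proof.
move=> y0; rewrite expRN ler_pdivrMr ?expR_gt0// mul1r.
by rewrite (le_trans _ (expR_ge1Dx y))// lerDr.
Qed.

Lemma sq_gauss_le (x : R) :
  x ^+ 2 * expR (- x ^+ 2 / 2) <= 4 * expR (- x ^+ 2 / 4).
Proof.
have -> : - x ^+ 2 / 2 = - (x ^+ 2 / 4) + - x ^+ 2 / 4 by field.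
rewrite expRD mulrA ler_wpM2r ?expR_ge0//.
have -> : x ^+ 2 * expR (- (x ^+ 2 / 4)) =
  4 * ((x ^+ 2 / 4) * expR (- (x ^+ 2 / 4))) by field.
rewrite -[X in _ <= X]mulr1 ler_wpM2l// xexpN_le1//.
by rewrite divr_ge0 ?sqr_ge0.
Qed.

Lemma fv_normal : finite_var (@std_normal R).
Proof.
rewrite /finite_var normal_ge0//; last first.
  by move=> x; rewrite lee_fin sqr_ge0.
  by apply/measurable_EFinP; exact: exprn_measurable.
set s := Num.sqrt (2 : R).
have s0 : s != 0 by rewrite sqrtr_eq0 -ltNge.
have s2 : s ^+ 2 = 2 by rewrite sqr_sqrtr.
set c := 4 * normal_peak 1 / normal_peak s.
apply: (@le_lt_trans _ _ (\int[lebesgue_measure]_x (c * normal_pdf 0 s x)%:E)%E).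
  apply: ge0_le_integral => //.
  - by move=> x _; rewrite lee_fin mulr_ge0 ?sqr_ge0 ?normal_pdf_ge0.
  - apply/measurable_EFinP; apply: measurable_funM; first exact: exprn_measurable.
    exact: measurable_normal_pdf.
  - apply/measurable_EFinP; apply: measurable_funM => //.
    exact: measurable_normal_pdf.
  move=> x _; rewrite lee_fin (normal_pdfE _ s0) (normal_pdfE _ (oner_neq0 R)).
  rewrite /normal_fun !subr0 expr1n s2 /c.
  have p1 := normal_peak_gt0 (oner_neq0 R).
  have ps := normal_peak_gt0 s0.
  have e4 : (2 : R) *+ 2 = 4 by rewrite mulr2n; lra.
  rewrite e4.
  have -> : 4 * normal_peak 1 / normal_peak s * (normal_peak s * expR (- x ^+ 2 / 4))
    = normal_peak 1 * (4 * expR (- x ^+ 2 / 4)) by field; rewrite gt_eqF.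
  rewrite mulrCA ler_wpM2l ?(ltW p1)//.
  exact: sq_gauss_le.
under eq_integral do rewrite EFinM.
rewrite integralZl//; first by rewrite integral_normal_pdf mule1 ltry.
exact: integrable_normal_pdf.
Qed.

Lemma mf_shift (f : R -> R) (z : R) : continuous f ->
  measurable_fun setT (fun w : BorelR R => f (z + w)).
Proof.
move=> cf; apply: measurableT_comp; first exact: continuous_measurable_fun.
exact: measurable_funD.
Qed.

Lemma pw_bound (L : law) (f : R -> R) (M z eps del : R) :
  finite_var L -> continuous f -> (forall x, `|f x| <= M) -> 0 < del ->
  (forall w, `|w| < del -> `|f (z + w) - f z| <= eps) ->
  `| \int[L]_w (f (z + w) + M) - (f z + M)| <= eps + (2 * M / del ^+ 2) * m2 L.
Proof.
move=> fv cf fM del0 fd.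
have M0 : 0 <= M by rewrite (le_trans _ (fM 0)).
have eps0 : 0 <= eps by have := fd 0; rewrite normr0 addr0 subrr normr0 => /(_ del0).
set c := 2 * M / del ^+ 2.
have c0 : 0 <= c by rewrite /c; apply: divr_ge0; [apply: mulr_ge0 | apply: sqr_ge0].
have mfz := @mf_shift f z cf.
have i1 : L.-integrable setT (EFin \o (fun w => f (z + w) + M)).
  apply: (@int_bound L (fun w => f (z + w) + M) (2 * M) 0) => //.
    by apply: measurable_funD.
  move=> x; rewrite mul0r addr0 (le_trans (ler_normD _ _))// (ger0_norm M0).
  by have := fM (z + x); lra.
have i2 : L.-integrable setT (EFin \o (fun w : BorelR R => f z + M)).
  exact: (finite_measure_integrable_cst L _ measurableT).
have i3 : L.-integrable setT (EFin \o (fun w => f (z + w) - f z)).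
  apply: (@int_bound L (fun w => f (z + w) - f z) (2 * M) 0) => //.
    by apply: measurable_funB.
  move=> x; rewrite mul0r addr0 (le_trans (ler_normB _ _))//.
  by have := fM (z + x); have := fM z; lra.
have i4 : L.-integrable setT (EFin \o (fun w => `|f (z + w) - f z|)).
  exact: integrable_norm.
have i5 : L.-integrable setT (EFin \o (fun w : BorelR R => c * w ^+ 2 + 0 * w + eps)).
  apply: (@int_bound L (fun w => c * w ^+ 2 + 0 * w + eps) eps c) => //.
    apply: measurable_funD => //; apply: measurable_funD => //.
    exact: measurable_funM.
  move=> x; rewrite mul0r addr0 ger0_norm; last by rewrite addr_ge0// mulr_ge0// sqr_ge0.
  by rewrite addrC.
have EE : \int[L]_w (f (z + w) + M) - (f z + M) = \int[L]_w (f (z + w) - f z).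
  rewrite -[X in _ - X](_ : \int[L]_(w in setT) (f z + M) = _); last first.
    rewrite Rintegral_cst//.
    by rewrite [X in _ * fine X](_ : _ = 1%E) ?mulr1//; exact: probability_setT.
  rewrite -RintegralB//; apply: eq_Rintegral => w _; ring.
rewrite EE.
apply: (le_trans (le_normr_Rintegral _ _)) => //.
apply: (@le_trans _ _ (\int[L]_w (c * w ^+ 2 + 0 * w + eps))).
  apply: le_Rintegral => // w _.
  have [wd|wd] := ltP `|w| del.
    by rewrite mul0r addr0 (le_trans (fd _ wd))// lerDr mulr_ge0 ?sqr_ge0.
  rewrite mul0r addr0.
  apply: (@le_trans _ _ (c * w ^+ 2)); last by rewrite lerDl.
  have w2 : del ^+ 2 <= w ^+ 2.
    have := real_normK (num_real w) => <-.
    have := normr_ge0 w; nra.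
  apply: (@le_trans _ _ (2 * M)).
    by rewrite (le_trans (ler_normB _ _))//; have := fM (z + w); have := fM z; lra.
  rewrite /c mulrAC ler_pdivlMr ?exprn_gt0//.
  by rewrite ler_wpM2l// mulr_ge0.
by rewrite /Rintegral quadE// mul0r addr0 /= addrC.
Qed.

Lemma pw_cvg (Lk : nat -> law) (f : R -> R) (M z : R) :
  continuous f -> (forall x, `|f x| <= M) -> (forall k, finite_var (Lk k)) ->
  (fun k => m2 (Lk k)) @ \oo --> 0 ->
  (fun k => \int[Lk k]_w (f (z + w) + M)%:E)%E @ \oo --> (f z + M)%:E.
Proof.
move=> cf fM fv mk.
have M0 : 0 <= M by rewrite (le_trans _ (fM 0)).
apply: cvg_EFin.
  apply: nearW => k; apply: integrable_fin_num => //.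
  apply: (@int_bound (Lk k) (fun w => f (z + w) + M) (2 * M) 0) => //.
    by apply: measurable_funD => //; exact: mf_shift.
  move=> x; rewrite mul0r addr0 (le_trans (ler_normD _ _))// (ger0_norm M0).
  by have := fM (z + x); lra.
apply/cvgrPdist_le => eps eps0.
have := cf z; move/cvgrPdist_le => /(_ (eps / 2)) /(_ _) /nbhs_ballP.
case; first by rewrite divr_gt0.
move=> del /= del0 Hd.
set c := 2 * M / del ^+ 2.
have c0 : 0 <= c by rewrite /c; apply: divr_ge0; [apply: mulr_ge0 | apply: sqr_ge0].
have e1 : 0 < eps / 2 / (c + 1) by rewrite !divr_gt0// ltr_wpDl.
move: mk => /cvgrPdist_le /(_ _ e1); apply: filterS => k /= Hk.
have Hb := @pw_bound (Lk k) f M z (eps / 2) del (fv k) cf fM del0.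
rewrite distrC; apply: (le_trans (Hb _)).
  move=> w wd; rewrite distrC.
  have : ball z del (z + w) by rewrite -ball_normE /= opprD addNKr normrN.
  by move/Hd.
rewrite -/c.
have : m2 (Lk k) <= eps / 2 / (c + 1).
  by rewrite (le_trans _ Hk)// sub0r normrN ler_norm.
move=> h.
have e0 : 0 <= eps / 2 / (c + 1) by exact: ltW.
have ee : (c + 1) * (eps / 2 / (c + 1)) = eps / 2.
  by field; rewrite gt_eqF// ltr_wpDl.
have := ler_wpM2l c0 h.
nra.
Qed.

Lemma Rint_shift (Z : law) (f : R -> R) (M : R) : finite_var Z ->
  continuous f -> (forall x, `|f x| <= M) ->
  \int[Z]_x f x = fine (\int[Z]_x (f x + M)%:E)%E - M.
Proof.
move=> fv cf fM.
have M0 : 0 <= M by rewrite (le_trans _ (fM 0)).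
have mf : measurable_fun setT (f : BorelR R -> R).
  exact: continuous_measurable_fun.
rewrite -[fine _]/(\int[Z]_x (f x + M)) RintegralD//.
- rewrite Rintegral_cst//.
  by rewrite [X in _ * fine X](_ : _ = 1%E) ?mulr1 ?addrK//; exact: probability_setT.
- apply: (@int_bound Z f M 0) => // x; by rewrite mul0r addr0.
- exact: (finite_measure_integrable_cst Z _ measurableT).
Qed.

Lemma cvgd (Lk : nat -> law) : (forall k, finite_var (Lk k)) ->
  (fun k => m2 (Lk k)) @ \oo --> 0 ->
  cvg_in_dist (fun k => convL std_normal (Lk k)) std_normal.
Proof.
move=> fv mk f cf [M fM].
have M0 : 0 <= M by rewrite (le_trans _ (fM 0)).
have mf : measurable_fun setT (f : BorelR R -> R).
  exact: continuous_measurable_fun.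
have fN := @fv_normal.
have fZ k : finite_var (convL std_normal (Lk k)).
  by have [] := conv_mom _ _ fN (fv k).
rewrite (@Rint_shift _ f M)//.
under eq_fun do rewrite (@Rint_shift _ f M)//.
apply: cvgB; last exact: cvg_cst.
apply: fine_cvg.
have fin : (\int[std_normal]_x (f x + M)%:E)%E \is a fin_num.
  apply: integrable_fin_num => //.
  apply: (@int_bound _ (fun x => f x + M) (2 * M) 0) => //.
    exact: measurable_funD.
  move=> x; rewrite mul0r addr0 (le_trans (ler_normD _ _))// (ger0_norm M0).
  by have := fM x; lra.
rewrite fineK//.
have mg : measurable_fun setT (fun x : BorelR R => (f x + M)%:E).
  by apply/measurable_EFinP; exact: measurable_funD.
have g0 x : (0 <= (f x + M)%:E)%E.
  by rewrite lee_fin; move: (fM x) => /ler_normlP [h1 h2]; lra.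
under eq_fun do rewrite (@conv_ge0 std_normal _ (fun x => (f x + M)%:E))//.
apply: (@dominated_cvg _ _ _ std_normal setT measurableT _ _
   (fun _ => (2 * M)%:E)).
- move=> n; apply: (@measurable_fun_fubini_tonelli_F _ _ _ _ _ (Lk n)
     (fun p : BorelR R * BorelR R => (f (p.1 + p.2) + M)%:E)).
  + apply/measurable_EFinP; apply: measurable_funD => //.
    apply: measurableT_comp => //; exact: measurable_addp.
  + by move=> p; exact: g0.
- move=> z _; exact: pw_cvg.
- by move=> z _.
- exact: (finite_measure_integrable_cst std_normal _ measurableT).
- move=> n z _.
  rewrite gee0_abs; last by apply: integral_ge0 => y _; exact: g0.
  apply: (@le_trans _ _ (\int[Lk n]_y (2 * M)%:E)%E).
    apply: ge0_le_integral => //.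
    + apply/measurable_EFinP; apply: measurable_funD => //.
      exact: mf_shift.
    + by move=> y _; rewrite lee_fin; move: (fM (z + y)) => /ler_normlP [h1 h2]; lra.
  rewrite integral_cst//.
  by rewrite [X in (_ * X)%E](_ : _ = 1%E) ?mule1//; exact: probability_setT.
Qed.
End S.

Theorem theorem1 (R : realType) (T : (set R -> \bar R) -> R)
  (Hloc : forall (P : law R) (a b : R), finite_var P ->
     T (affine_image P a b) = a * T (dist P) + b)
  (Hadd : forall P Q : law R, finite_var P -> finite_var Q ->
     T (conv_law P Q) = T (dist P) + T (dist Q))
  (Hcont : forall Pn : nat -> law R,
     (forall n, finite_var (Pn n)) -> cvg_in_dist Pn std_normal ->
     (fun n => T (dist (Pn n))) @ \oo --> T (dist std_normal)) :
  forall P : law R, finite_var P -> T (dist P) = mean P.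

Proof.
move=> P fP.
have mom := seqL_mom P fP.
set c := T (dist P) - mean P.
have TL k : T (dist (seqL P k)) = c.
  elim: k => [|k IH].
    by rewrite /= affLE Hloc// mul1r.
  have [fk _ _] := mom k.
  have [fC _ _] := conv_mom _ _ fk fk.
  rewrite /= affLE Hloc// convLE Hadd// IH addr0.
  have h2 : (2 : R) != 0 by rewrite pnatr_eq0.
  by field.
have fN := @fv_normal R.
pose Z k := convL std_normal (seqL P k).
have fZ j : finite_var (Z j) by have [fk _ _] := mom j; have [] := conv_mom _ _ fN fk.
have TZ j : T (dist (Z j)) = T (dist std_normal) + c.
  by have [fk _ _] := mom j; rewrite /Z convLE Hadd// TL.
have mk : (fun k => m2 (seqL P k)) @ \oo --> 0.
  have -> : (fun k => m2 (seqL P k)) = geometric (m2 (seqL P 0)) (2^-1).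
    by apply/funext => k; have [_ _ ->] := mom k.
  by apply: cvg_geometric; rewrite ger0_norm ?invr_ge0// invf_lt1// ?ltr1n.
have fk k : finite_var (seqL P k) by have [] := mom k.
have HZ := Hcont Z fZ (cvgd _ fk mk).
have E : (fun n => T (dist (Z n))) = (fun _ => T (dist std_normal) + c).
  by apply/funext => n; exact: TZ.
rewrite E in HZ.
have := cvg_lim _ HZ; rewrite lim_cst// => h.
have {}h : T (dist std_normal) + c = T (dist std_normal) by apply: h; exact: _.
have c0 : c = 0 by lra.
by move: c0; rewrite /c; lra.
Qed.
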